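(* If $A\subseteq\mathbb{N}$ is $D$-w.e.u., then there is a disjoint strong array intersecting $\overline{A}=\mathbb{N}\setminus A$; that is, there is a computable $h\colon\mathbb{N}\to\mathfrak{P}_{\mathrm{fin}}(\mathbb{N})$ with $h(n)\cap h(m)=\emptyset$ for all $n\neq m$ and such that for every $n$ there is $z\in h(n)$ with $z\notin A$.
   Context: $\varphi_0,\varphi_1,\ldots$ is a standard acceptable enumeration of the partial computable functions $\mathbb{N}\to\mathbb{N}$, $\mathbb{1}_A$ the characteristic function of $A$. $\mathfrak{P}_{\mathrm{fin}}(\mathbb{N})$ is the set of finite subsets of $\mathbb{N}$; $f\colon\mathbb{N}\to\mathfrak{P}_{\mathrm{fin}}(\mathbb{N})$ is computable if $e\mapsto$ (canonical index of $f(e)$) is computable. A recursively enumerable $A$ is $D$-w.e.u. if there is a computable $f\colon\mathbb{N}\to\mathfrak{P}_{\mathrm{fin}}(\mathbb{N})$ such that for all $e$: if $\varphi_e(z)$ is defined for all $z\in f(e)$, then there is $z\in f(e)$ with $\varphi_e(z)\neq\mathbb{1}_A(z)$. *)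

(* Defs.v *)
(* A concrete model of partial computable
   functions: Kleene mu-recursive function terms, Goedel-numbered via
   MathComp's countable encoding of generic trees. *)
From mathcomp Require Import all_boot.

Set Implicit Arguments.
Unset Strict Implicit.
Unset Printing Implicit Defensive.

(* Syntax of (partial) mu-recursive functions; arity is implicit, argument
   vectors are lists. *)
Inductive recf : Type :=
  | RZero : recf
  | RSucc : recf
  | RProj : nat -> recf
  | RComp : recf -> list recf -> recf
  | RPrim : recf -> recf -> recf
  | RMu   : recf -> recf.

Inductive eval : recf -> seq nat -> nat -> Prop :=
  | ev_zero v : eval RZero v 0
  | ev_succ v : eval RSucc v (head 0 v).+1
  | ev_proj i v : eval (RProj i) v (nth 0 v i)
  | ev_comp f gs v ws y :
      evals gs v ws -> eval f ws y -> eval (RComp f gs) v y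
  | ev_prim0 f g v y : eval f v y -> eval (RPrim f g) (0 :: v) y
  | ev_primS f g n v z y :
      eval (RPrim f g) (n :: v) z -> eval g (n :: z :: v) y ->
      eval (RPrim f g) (n.+1 :: v) y
  | ev_mu f v n :
      eval f (n :: v) 0 ->
      (forall m, m < n -> exists k, eval f (m :: v) k.+1) ->
      eval (RMu f) v n
with evals : list recf -> seq nat -> seq nat -> Prop :=
  | evs_nil v : evals [::] v [::]
  | evs_cons g gs v y ys : eval g v y -> evals gs v ys -> evals (g :: gs) v (y :: ys).

(* Decoding generic trees (a countType, hence Goedel-numbered by nat via
   pickle/unpickle) into recursive-function terms; every term is hit. *)
Fixpoint decode (t : GenTree.tree nat) : option recf :=
  match t with
  | GenTree.Leaf _ => None
  | GenTree.Node n ts =>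
    let fix decs (ts : seq (GenTree.tree nat)) : option (seq recf) :=
      match ts with
      | [::] => Some [::]
      | t :: ts' =>
        match decode t, decs ts' with
        | Some f, Some fs => Some (f :: fs)
        | _, _ => None
        end
      end in
    match n, ts with
    | 0, [::] => Some RZero
    | 1, [::] => Some RSucc
    | 2, [:: GenTree.Leaf i] => Some (RProj i)
    | 3, f :: gs =>
      match decode f, decs gs with
      | Some f', Some gs' => Some (RComp f' gs')
      | _, _ => None
      end
    | 4, [:: f; g] =>
      match decode f, decode g with
      | Some f', Some g' => Some (RPrim f' g')
      | _, _ => None
      end
    | 5, [:: f] =>
      match decode f with Some f' => Some (RMu f') | None => None end
    | _, _ => None
    end
  end.

Definition code (e : nat) : option recf :=
  match (unpickle e : option (GenTree.tree nat)) with
  | Some t => decode t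
  | None => None
  end.

(* The fixed standard enumeration: phi e x y  <->  varphi_e(x) is defined
   and equals y.  Indices that do not decode are nowhere defined. *)
Definition phi (e x y : nat) : Prop :=
  exists t, code e = Some t /\ eval t [:: x] y.

Definition defined (e x : nat) : Prop := exists y, phi e x y.

Definition computable (g : nat -> nat) : Prop :=
  exists e, forall n, phi e n (g n).

(* Canonical indexing of finite sets: D_u = { z | bit z of u is 1 },
   i.e. u = sum_{z in D_u} 2^z.  A function f : N -> P_fin(N) is given
   by the function n |-> canonical index of f(n). *)
Definition Dfin (u z : nat) : bool := odd (u %/ 2 ^ z).

Definition re (A : nat -> bool) : Prop :=
  exists e, forall z, A z <-> defined e z.

Definition charf (A : nat -> bool) (z : nat) : nat := nat_of_bool (A z).

Definition D_weu (A : nat -> bool) : Prop :=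
  re A /\
  exists f : nat -> nat, computable f /\
    forall e,
      (forall z, Dfin (f e) z -> defined e z) ->
      exists z, Dfin (f e) z /\ exists y, phi e z y /\ y <> charf A z.

(* Main.v *)
Require Import Defs.
From mathcomp Require Import all_boot.
Set Implicit Arguments.
Unset Strict Implicit.
Unset Printing Implicit Defensive.

Fixpoint allP (P : recf -> Prop) (l : list recf) : Prop :=
  if l is g :: l' then P g /\ allP P l' else True.

Definition recf_ind' (P : recf -> Prop)
  (H0 : P RZero) (H1 : P RSucc) (H2 : forall i, P (RProj i))
  (H3 : forall f gs, P f -> allP P gs -> P (RComp f gs))
  (H4 : forall f g, P f -> P g -> P (RPrim f g))
  (H5 : forall f, P f -> P (RMu f)) : forall t, P t :=
  fix loop t := match t with
  | RZero => H0 | RSucc => H1 | RProj i => H2 i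
  | RComp f gs => H3 f gs (loop f)
      ((fix iter (l : list recf) : allP P l :=
         match l with [::] => I
         | g :: l' => conj (loop g) (iter l') end) gs)
  | RPrim f g => H4 f g (loop f) (loop g)
  | RMu f => H5 f (loop f) end.


Lemma inv_comp f gs v y : eval (RComp f gs) v y -> exists ws, evals gs v ws /\ eval f ws y.
Proof. by inversion 1; eauto. Qed.
Lemma inv_prim f g v y : eval (RPrim f g) v y ->
  (exists w, v = 0 :: w /\ eval f w y) \/
  (exists n w z, v = n.+1 :: w /\ eval (RPrim f g) (n :: w) z /\ eval g [:: n, z & w] y).
Proof. by inversion 1; [left | right]; eauto 10. Qed.
Lemma inv_mu f v n : eval (RMu f) v n ->
  eval f (n :: v) 0 /\ (forall m, m < n -> exists k, eval f (m :: v) k.+1).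
Proof. by inversion 1. Qed.
Lemma inv_nil v ws : evals [::] v ws -> ws = [::].
Proof. by inversion 1. Qed.
Lemma inv_cons g gs v ws : evals (g :: gs) v ws ->
  exists y ys, ws = y :: ys /\ eval g v y /\ evals gs v ys.
Proof. by inversion 1; eauto. Qed.

Lemma eval_det t : forall v y y', eval t v y -> eval t v y' -> y = y'.
Proof.
elim/recf_ind': t.
- by move=> v y y' H1 H2; inversion H1; inversion H2.
- by move=> v y y' H1 H2; inversion H1; inversion H2.
- by move=> i v y y' H1 H2; inversion H1; inversion H2.
- move=> f gs IHf IHgs v y y' /inv_comp[ws [Hs Hf]] /inv_comp[ws' [Hs' Hf']].
  suff E : ws = ws' by subst; apply: IHf; eauto.
  elim: gs IHgs ws ws' Hs Hs' {Hf Hf'} => [|g gs IH] HF ws ws' E1 E2.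
    by rewrite (inv_nil E1) (inv_nil E2).
  case: HF => Hg HF.
  case/inv_cons: E1 => [y1 [ys1 [-> [H1 H2]]]].
  case/inv_cons: E2 => [y2 [ys2 [-> [H3 H4]]]].
  by rewrite (Hg _ _ _ H1 H3) (IH HF _ _ H2 H4).
- move=> f g IHf IHg [//|n w] y y' H1 H2.
  + by inversion H1.
  elim: n y y' H1 H2 => [|n IH] y y'.
    case/inv_prim=> [[w1 [[<-] H1]]|[? [? [? [//]]]]].
    case/inv_prim=> [[w2 [[<-] H2]]|[? [? [? [//]]]]].
    exact: IHf H1 H2.
  case/inv_prim=> [[? [//]]|[n1 [w1 [z1 [[<- <-] [H1 H2]]]]]].
  case/inv_prim=> [[? [//]]|[n2 [w2 [z2 [[<- <-] [H3 H4]]]]]].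
  have E := IH _ _ H1 H3; subst; exact: IHg H2 H4.
- move=> f IHf v n n' /inv_mu[H1 H2] /inv_mu[H3 H4].
  case: (ltngtP n n') => // Hlt.
  + by case: (H4 _ Hlt) => k Hk; have := IHf _ _ _ H1 Hk.
  + by case: (H2 _ Hlt) => k Hk; have := IHf _ _ _ H3 Hk.
Qed.

Fixpoint enc (t : recf) : GenTree.tree nat :=
  match t with
  | RZero => GenTree.Node 0 [::]
  | RSucc => GenTree.Node 1 [::]
  | RProj i => GenTree.Node 2 [:: GenTree.Leaf i]
  | RComp f gs => GenTree.Node 3 (enc f :: map enc gs)
  | RPrim f g => GenTree.Node 4 [:: enc f; enc g]
  | RMu f => GenTree.Node 5 [:: enc f]
  end.

Lemma decode_enc t : decode (enc t) = Some t.
Proof.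
elim/recf_ind': t => //=.
- move=> f gs -> /= H.
  suff -> : (fix decs (ts : seq (GenTree.tree nat)) : option (seq recf) :=
       match ts with
       | [::] => Some [::]
       | t :: ts' =>
           match decode t with
           | Some f0 =>
               match decs ts' with
               | Some fs => Some (f0 :: fs)
               | None => None
               end
           | None => None
           end
       end) [seq enc i | i <- gs] = Some gs by [].
  by elim: gs H => //= g gs IH [-> /IH ->].
- by move=> f g -> ->.
- by move=> f ->.
Qed.

Definition idx (t : recf) : nat := pickle (enc t).
Lemma code_idx t : code (idx t) = Some t.
Proof. by rewrite /code /idx pickleK decode_enc. Qed.

Definition tot (t : recf) (F : seq nat -> nat) := forall v, eval t v (F v).

Lemma tot_ext t F G : tot t F -> (forall v, F v = G v) -> tot t G.
Proof. by move=> H E v; rewrite -E. Qed.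

Lemma tot_zero : tot RZero (fun _ => 0).
Proof. by move=> v; constructor. Qed.
Lemma tot_succ : tot RSucc (fun v => (nth 0 v 0).+1).
Proof. by move=> [|a v]; constructor. Qed.
Lemma tot_proj i : tot (RProj i) (fun v => nth 0 v i).
Proof. by move=> v; constructor. Qed.

Lemma tot_c1 f F g G : tot f F -> tot g G -> tot (RComp f [:: g]) (fun v => F [:: G v]).
Proof. by move=> Hf Hg v; econstructor; [repeat constructor; apply: Hg | apply: Hf]. Qed.
Lemma tot_c2 f F g1 G1 g2 G2 : tot f F -> tot g1 G1 -> tot g2 G2 ->
  tot (RComp f [:: g1; g2]) (fun v => F [:: G1 v; G2 v]).
Proof. by move=> Hf H1 H2 v; econstructor; [repeat constructor; [apply: H1|apply: H2] | apply: Hf]. Qed.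
Lemma tot_c3 f F g1 G1 g2 G2 g3 G3 : tot f F -> tot g1 G1 -> tot g2 G2 -> tot g3 G3 ->
  tot (RComp f [:: g1; g2; g3]) (fun v => F [:: G1 v; G2 v; G3 v]).
Proof. by move=> Hf H1 H2 H3 v; econstructor; [repeat constructor; [apply: H1|apply: H2|apply: H3] | apply: Hf]. Qed.

Fixpoint primf (F G : seq nat -> nat) n w :=
  if n is k.+1 then G [:: k, primf F G k w & w] else F w.

Lemma eval_prim f g F G : tot f F -> tot g G ->
  forall n w, eval (RPrim f g) (n :: w) (primf F G n w).
Proof.
move=> Hf Hg; elim=> [|n IH] w; first by constructor.
by econstructor; [apply: IH | apply: Hg].
Qed.

Definition Prim3 f g := RComp (RPrim f g) [:: RProj 0; RProj 1; RProj 2].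
Lemma tot_prim f g F G : tot f F -> tot g G ->
  tot (Prim3 f g) (fun v => primf F G (nth 0 v 0) [:: nth 0 v 1; nth 0 v 2]).
Proof.
move=> Hf Hg v; econstructor; first by repeat constructor.
exact: eval_prim.
Qed.

Fixpoint K (c : nat) : recf := if c is c'.+1 then RComp RSucc [:: K c'] else RZero.
Lemma tot_K c : tot (K c) (fun _ => c).
Proof.
elim: c => [|c IH]; first exact: tot_zero.
exact: (tot_c1 tot_succ IH).
Qed.

Definition tAdd := Prim3 (RProj 0) (RComp RSucc [:: RProj 1]).
Lemma tot_add : tot tAdd (fun v => nth 0 v 0 + nth 0 v 1).
Proof.
eapply tot_ext; [exact: (tot_prim (tot_proj 0) (tot_c1 tot_succ (tot_proj 1)))|] => v /=.
by elim: (nth 0 v 0) => //= n ->.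
Qed.

Definition tMul := Prim3 RZero (RComp tAdd [:: RProj 1; RProj 2]).
Lemma tot_mul : tot tMul (fun v => nth 0 v 0 * nth 0 v 1).
Proof.
eapply tot_ext; [exact: (tot_prim tot_zero (tot_c2 tot_add (tot_proj 1) (tot_proj 2)))|] => v /=.
by elim: (nth 0 v 0) => //= n ->; rewrite mulSn addnC.
Qed.

Definition tPred := Prim3 RZero (RProj 0).
Lemma tot_pred : tot tPred (fun v => (nth 0 v 0).-1).
Proof.
eapply tot_ext; [exact: (tot_prim tot_zero (tot_proj 0))|] => v /=; by case: (nth 0 v 0).
Qed.

Definition tSubR := Prim3 (RProj 0) (RComp tPred [:: RProj 1]).
Definition tSub := RComp tSubR [:: RProj 1; RProj 0].
Lemma tot_sub : tot tSub (fun v => nth 0 v 0 - nth 0 v 1).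
Proof.
eapply tot_ext; [exact: (tot_c2 (tot_prim (tot_proj 0) (tot_c1 tot_pred (tot_proj 1))) (tot_proj 1) (tot_proj 0))|] => v /=.
by elim: (nth 0 v 1) => [|n IH] /=; rewrite ?subn0 // IH subnS.
Qed.

Definition tPowR := Prim3 (K 1) (RComp tMul [:: RProj 1; RProj 2]).
Definition tPow := RComp tPowR [:: RProj 1; RProj 0].
Lemma tot_pow : tot tPow (fun v => nth 0 v 0 ^ nth 0 v 1).
Proof.
eapply tot_ext; [exact: (tot_c2 (tot_prim (tot_K 1) (tot_c2 tot_mul (tot_proj 1) (tot_proj 2))) (tot_proj 1) (tot_proj 0))|] => v /=.
by elim: (nth 0 v 1) => //= n ->; rewrite expnSr.
Qed.

Definition tOdd := Prim3 RZero (RComp tSub [:: K 1; RProj 1]).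
Lemma tot_odd : tot tOdd (fun v => odd (nth 0 v 0)).
Proof.
eapply tot_ext; [exact: (tot_prim tot_zero (tot_c2 tot_sub (tot_K 1) (tot_proj 1)))|] => v /=.
by elim: (nth 0 v 0) => //= n ->; case: (odd n).
Qed.

Definition tLe := RComp tSub [:: K 1; tSub].
Lemma tot_le : tot tLe (fun v => nth 0 v 0 <= nth 0 v 1).
Proof.
eapply tot_ext; [exact: (tot_c2 tot_sub (tot_K 1) tot_sub)|] => v /=.
by rewrite -subn_eq0; case: (nth 0 v 0 - nth 0 v 1).
Qed.

Definition tSg := RComp tSub [:: K 1; RComp tSub [:: K 1; RProj 0]].
Lemma tot_sg : tot tSg (fun v => 0 < nth 0 v 0).
Proof.
eapply tot_ext; [exact: (tot_c2 tot_sub (tot_K 1) (tot_c2 tot_sub (tot_K 1) (tot_proj 0)))|] => v /=.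
by case: (nth 0 v 0).
Qed.

Fixpoint sumf (F : nat -> nat) n := if n is k.+1 then sumf F k + F k else 0.

Definition Sum tF := Prim3 RZero (RComp tAdd [:: RProj 1; RComp tF [:: RProj 0; RProj 2; RProj 3]]).
Lemma tot_sum tF F : tot tF F ->
  tot (Sum tF) (fun v => sumf (fun k => F [:: k; nth 0 v 1; nth 0 v 2]) (nth 0 v 0)).
Proof.
move=> HF.
eapply tot_ext; [exact: (tot_prim tot_zero (tot_c2 tot_add (tot_proj 1) (tot_c3 HF (tot_proj 0) (tot_proj 2) (tot_proj 3))))|] => v /=.
by elim: (nth 0 v 0) => //= n ->.
Qed.

Lemma sumf_le_div x d n : 0 < d ->
  sumf (fun k => k.+1 * d <= x) n = minn n (x %/ d).
Proof.
move=> d0; elim: n => [|n IH] /=; first by rewrite min0n. rewrite IH.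
rewrite -leq_divRL //.
case: (leqP n.+1 (x %/ d)) => H.
  by rewrite !(minn_idPl _) ?addn1 // ltnW.
by rewrite addn0 !(minn_idPr _) // -ltnS.
Qed.

Definition tDiv := RComp (Sum (RComp tLe [:: RComp tMul [:: RComp RSucc [:: RProj 0]; RProj 2]; RProj 1]))
   [:: RProj 0; RProj 0; RProj 1].
Lemma tot_div : tot tDiv (fun v => if 0 < nth 0 v 1 then nth 0 v 0 %/ nth 0 v 1 else nth 0 v 0).
Proof.
eapply tot_ext; [exact: (tot_c3 (tot_sum (tot_c2 tot_le (tot_c2 tot_mul (tot_c1 tot_succ (tot_proj 0)) (tot_proj 2)) (tot_proj 1))) (tot_proj 0) (tot_proj 0) (tot_proj 1))|] => v /=.
case: ifP => d0.
  by rewrite sumf_le_div // (minn_idPr _) // leq_div.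
rewrite lt0n in d0; move/negbFE/eqP: d0 => ->.
have E : forall x n, sumf (fun k => k.+1 * 0 <= x) n = n by move=> x; elim=> //= n ->; rewrite muln0 addn1.
exact: E.
Qed.

Definition mem (u z : nat) : bool := odd (u %/ 2 ^ z).
Definition tMem := RComp tOdd [:: RComp tDiv [:: RProj 0; RComp tPow [:: K 2; RProj 1]]].
Lemma tot_mem : tot tMem (fun v => mem (nth 0 v 0) (nth 0 v 1)).
Proof.
eapply tot_ext; [exact: (tot_c1 tot_odd (tot_c2 tot_div (tot_proj 0) (tot_c2 tot_pow (tot_K 2) (tot_proj 1))))|] => v /=.
by rewrite expn_gt0.
Qed.

Lemma bits_lt (b : nat -> bool) B : sumf (fun i => 2 ^ i * b i) B < 2 ^ B.
Proof.
elim: B => //= B IH; rewrite expnS mul2n -addnn.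
apply: (@leq_trans (2 ^ B + 2 ^ B * b B)); first by rewrite ltn_add2r.
by rewrite leq_add2l; case: (b B); rewrite ?muln1 ?muln0.
Qed.

Lemma mem_bits (b : nat -> bool) B z :
  mem (sumf (fun i => 2 ^ i * b i) B) z = (z < B) && b z.
Proof.
rewrite /mem; elim: B => [|B IH] /=; first by rewrite div0n.
case: (ltngtP z B) => Hz.
- have E : 2 ^ B = 2 ^ z * 2 ^ (B - z) by rewrite -expnD subnKC // ltnW.
  rewrite E -mulnA divnDr ?dvdn_mulr // mulKn ?expn_gt0 //.
  rewrite oddD IH -(subnSK Hz) expnS -mulnA oddM /= addbF.
  by rewrite ltnS (ltnW Hz) Hz.
- rewrite ltnS leqNgt Hz /=.
  rewrite divn_small // (leq_trans _ (leq_pexp2l _ Hz)) // expnS mul2n -addnn.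
  apply: (@leq_trans (2 ^ B + 2 ^ B * b B)); first by rewrite ltn_add2r bits_lt.
  by rewrite leq_add2l; case: (b B); rewrite ?muln1 ?muln0.
- subst z; rewrite ltnSn /= divnDr ?dvdn_mulr // divn_small ?bits_lt // add0n.
  by rewrite mulKn ?expn_gt0 //; case: (b B).
Qed.

Lemma mem_lt u z : mem u z -> z < u.
Proof.
rewrite /mem => H.
have : 0 < u %/ 2 ^ z by case: (u %/ 2 ^ z) H.
rewrite divn_gt0 ?expn_gt0 // => H2.
exact: leq_trans (ltn_expl _ (ltnSn 1)) H2.
Qed.

Definition cf (l : seq nat) m := foldr (fun n m => 2 ^ n * m.*2.+1) m l.
Definition al (l : seq nat) := foldr (fun n a => 2 ^ n * 2 * a) 1 l.
Lemma cf_aff l m : cf l m = al l * m + cf l 0.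
Proof.
elim: l => [|n l IH] /=; first by rewrite mul1n addn0.
rewrite IH; set a := al l; set c := cf l 0; set p := 2 ^ n.
by rewrite doubleD -addnS mulnDr -mul2n !mulnA (mulnC p 2).
Qed.

Lemma cf_cat l1 l2 m : cf (l1 ++ l2) m = cf l1 (cf l2 m).
Proof. by rewrite /cf foldr_cat. Qed.

Definition E t := map pickle (GenTree.encode (enc t)).
Lemma idxE t : idx t = cf (E t) 0.
Proof. by []. Qed.

Definition pj j := pickle (inl j : nat + nat).
Lemma EK0 : E (K 0) = [:: pj 1; pj 0].
Proof. by []. Qed.
Lemma EKS s : E (K s.+1) = [:: pj 4; pj 2; pj 0] ++ E (K s) ++ [:: pj 0].
Proof. by rewrite /E /= map_rcons /= cats0 -cats1. Qed.
Lemma E_comp f gs : E (RComp f gs) = pj 4 :: E f ++ flatten (map E gs) ++ [:: pj 0].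
Proof.
rewrite /E /= map_rcons -cats1 map_cat map_flatten -map_comp.
rewrite -catA -map_comp; reflexivity.
Qed.
Global Opaque pj.


Lemma al_cat l1 l2 : al (l1 ++ l2) = al l1 * al l2.
Proof. by elim: l1 => [|n l IH] /=; rewrite ?mul1n // IH !mulnA. Qed.

Global Opaque al cf.
Definition XK := [:: pj 4; pj 2; pj 0].
Definition YK := [:: pj 0].
Definition ZK := [:: pj 1; pj 0].
Definition aK s := al (E (K s)).
Definition bK s := cf (E (K s)) 0.
Lemma aKE s : aK s = (al XK * al YK) ^ s * al ZK.
Proof.
rewrite /aK; elim: s => [|s IH]; first by rewrite EK0 expn0 mul1n.
rewrite EKS !al_cat IH -/XK -/YK.
move: (al XK) (al YK) (al ZK) => a b c.
rewrite expnS -!mulnA; congr (_ * _); by rewrite [RHS]mulnC -mulnA [c * b]mulnC.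
Qed.
Lemma bKS s : bK s.+1 = al XK * (aK s * cf YK 0 + bK s) + cf XK 0.
Proof. by rewrite /bK /aK EKS !cf_cat -/XK -/YK cf_aff (cf_aff (E (K s))). Qed.

Definition PP := al XK * al YK.
Definition tAK := RComp tMul [:: RComp tPow [:: K PP; RProj 0]; K (al ZK)].
Lemma tot_AK : tot tAK (fun v => aK (nth 0 v 0)).
Proof.
eapply tot_ext; [exact: (tot_c2 tot_mul (tot_c2 tot_pow (tot_K _) (tot_proj 0)) (tot_K _))|] => v /=.
by rewrite aKE.
Qed.

Definition tBK := Prim3 (K (bK 0))
  (RComp tAdd [:: RComp tMul [:: K (al XK); RComp tAdd [:: RComp tMul [:: tAK; K (cf YK 0)]; RProj 1]]; K (cf XK 0)]).
Lemma tot_BK : tot tBK (fun v => bK (nth 0 v 0)).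
Proof.
eapply tot_ext; [exact: (tot_prim (tot_K (bK 0)) (tot_c2 tot_add (tot_c2 tot_mul (tot_K (al XK)) (tot_c2 tot_add (tot_c2 tot_mul tot_AK (tot_K (cf YK 0))) (tot_proj 1))) (tot_K (cf XK 0))))|] => v.
simpl; elim: (nth 0 v 0) => [|n IH]; first by []. simpl; rewrite IH bKS; reflexivity.
Qed.

Section WithA.
Variable tA : recf.

Definition Gp := RComp RSucc [:: RComp RZero [:: RComp tA [:: RProj 2]]].
Definition tNotMem := RComp tSub [:: K 1; RComp tMem [:: RProj 1; RProj 0]].
Definition Q := RComp (RPrim RZero Gp) [:: tNotMem; RProj 0].
Definition T s := RComp Q [:: RProj 0; K s].

Definition XT := pj 4 :: E Q ++ E (RProj 0).
Definition YT := [:: pj 0].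
Lemma idxT s : idx (T s) = al XT * (aK s * cf YT 0 + bK s) + cf XT 0.
Proof.
have -> : idx (T s) = cf (XT ++ E (K s) ++ YT) 0.
  rewrite idxE /T E_comp /XT /YT /=.
  by rewrite cats0 -!catA.
by rewrite !cf_cat cf_aff (cf_aff (E (K s))).
Qed.

Definition tC := RComp tAdd [:: RComp tMul [:: K (al XT); RComp tAdd [:: RComp tMul [:: tAK; K (cf YT 0)]; tBK]]; K (cf XT 0)].
Lemma tot_C : tot tC (fun v => idx (T (nth 0 v 0))).
Proof.
eapply tot_ext; [exact: (tot_c2 tot_add (tot_c2 tot_mul (tot_K _) (tot_c2 tot_add (tot_c2 tot_mul tot_AK (tot_K _)) tot_BK)) (tot_K _))|] => v /=.
by rewrite idxT.
Qed.
End WithA.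

Lemma tot_NotMem : tot tNotMem (fun v => 1 - mem (nth 0 v 1) (nth 0 v 0)).
Proof. exact: (tot_c2 tot_sub (tot_K 1) (tot_c2 tot_mem (tot_proj 1) (tot_proj 0))). Qed.

Lemma evalsT (tA : recf) s z : evals [:: RProj 0; K s] [:: z] [:: z; s].
Proof. by repeat constructor; apply: tot_K. Qed.

Lemma evalsQ (tA : recf) s z : evals [:: tNotMem; RProj 0] [:: z; s] [:: 1 - mem s z; z].
Proof. by repeat constructor; apply: tot_NotMem. Qed.

Lemma T_def0 tA s z : mem s z -> eval (T tA s) [:: z] 0.
Proof.
move=> H; econstructor; first exact: (evalsT tA).
econstructor; first exact: (evalsQ tA).
by rewrite H; repeat constructor.
Qed.

Lemma T_def1 tA s z y0 : ~~ mem s z -> eval tA [:: z] y0 -> eval (T tA s) [:: z] 1.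
Proof.
move=> H H0; econstructor; first exact: (evalsT tA).
econstructor; first exact: (evalsQ tA).
rewrite (negbTE H) /=.
apply: (@ev_primS _ _ 0 _ 0); first by repeat constructor.
apply: (@ev_comp _ _ _ [:: 0]); last exact: (ev_succ [:: 0]).
apply: evs_cons; last exact: evs_nil.
apply: (@ev_comp _ _ _ [:: y0]); last exact: ev_zero.
apply: evs_cons; last exact: evs_nil.
apply: (@ev_comp _ _ _ [:: z]); last exact: H0.
apply: evs_cons; last exact: evs_nil.
exact: (ev_proj 2 [:: 0; 0; z]).
Qed.

Lemma T_inv tA s z y : eval (T tA s) [:: z] y ->
  (mem s z /\ y = 0) \/ (~~ mem s z /\ (exists y0, eval tA [:: z] y0) /\ y = 1).
Proof.
case/inv_comp=> ws [Hws HQ].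
case/inv_cons: Hws => a1 [l1 [E1 [H1 Hws]]].
case/inv_cons: Hws => a2 [l2 [E2 [H2 Hws]]].
rewrite (inv_nil Hws) in E2; clear Hws; subst ws l1.
have E1 := eval_det H1 (tot_proj 0 _); have E2 := eval_det H2 (tot_K s _).
simpl in E1, E2; subst a1 a2; clear H1 H2.
case/inv_comp: HQ => ws [Hws HP].
case/inv_cons: Hws => b1 [m1 [F1 [H1 Hws]]].
case/inv_cons: Hws => b2 [m2 [F2 [H2 Hws]]].
rewrite (inv_nil Hws) in F2; clear Hws; subst ws m1.
have F1 := eval_det H1 (tot_NotMem _); have F2 := eval_det H2 (tot_proj 0 _).
simpl in F1, F2; subst b1 b2; clear H1 H2.
case: (boolP (mem s z)) => Hm; [rewrite Hm /= in HP | rewrite (negbTE Hm) /= in HP].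
  left; split => //.
  case/inv_prim: HP => [[w [_ H]]|[n [w [z0 [//]]]]].
  exact: eval_det H (tot_zero _).
right; split => //.
case/inv_prim: HP => [[w [//]]|[n [w [z0 [[_ Ew] [_ HG]]]]]].
subst w.
case/inv_comp: HG => ws [Hws HS].
case/inv_cons: Hws => c1 [n1 [G1 [H1 Hws]]].
rewrite (inv_nil Hws) in G1; clear Hws; subst ws.
case/inv_comp: H1 => ws [Hws HZ].
case/inv_cons: Hws => c2 [n2 [G2 [H2 Hws]]].
rewrite (inv_nil Hws) in G2; clear Hws; subst ws.
have G := eval_det HZ (tot_zero _); simpl in G; subst c1.
split; last exact: eval_det HS (tot_succ _).
case/inv_comp: H2 => ws [Hws HA].
case/inv_cons: Hws => c3 [n3 [G3 [H3 Hws]]].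
rewrite (inv_nil Hws) in G3; clear Hws; subst ws.
have G' := eval_det H3 (tot_proj 2 _); simpl in G'; subst c3.
by exists c2.
Qed.

Lemma sumf_ge F n k : k < n -> F k <= sumf F n.
Proof.
elim: n => // n IH; rewrite ltnS leq_eqVlt => /orP[/eqP->|H] /=.
  exact: leq_addl.
exact: leq_trans (IH H) (leq_addr _ _).
Qed.

Lemma sumf_pos F n : (0 < sumf F n) = has (fun k => 0 < F k) (iota 0 n).
Proof.
elim: n => [|n IH]; first by []. by rewrite -[n.+1]addn1 iotaD has_cat /= orbF add0n addn1 /= addn_gt0 IH.
Qed.

Lemma eq_sumf F G n : (forall k, F k = G k) -> sumf F n = sumf G n.
Proof. by move=> E; elim: n => //= n ->; rewrite E. Qed.

Section H.
Variables (tA tf : recf) (f : nat -> nat).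
Hypothesis Hf : forall n, eval tf [:: n] (f n).

Definition gS s := f (idx (T tA s)).
Definition tG := RComp tf [:: tC tA].
Lemma tot_G : tot tG (fun v => gS (nth 0 v 0)).
Proof. move=> v; econstructor; [repeat constructor; apply: tot_C | apply: Hf]. Qed.

Definition tPow2 t := RComp tPow [:: K 2; t].
Lemma tot_pow2 t F : tot t F -> tot (tPow2 t) (fun v => 2 ^ F v).
Proof. by move=> H; apply: (tot_c2 tot_pow (tot_K 2) H). Qed.

Definition Bd u := u + sumf gS (2 ^ u) + 1.
Definition tBd := RComp tAdd [:: RComp tAdd [:: RProj 0; RComp (Sum tG) [:: tPow2 (RProj 0); RProj 0; RProj 0]]; K 1].
Lemma tot_Bd : tot tBd (fun v => Bd (nth 0 v 0)).
Proof.
eapply tot_ext; [exact: (tot_c2 tot_add (tot_c2 tot_add (tot_proj 0) (tot_c3 (tot_sum tot_G) (tot_pow2 (tot_proj 0)) (tot_proj 0) (tot_proj 0))) (tot_K 1))|] => v /=.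
by [].
Qed.

Definition Pb u z : bool := 0 < mem u z + sumf (fun s => mem (gS s) z) (2 ^ u).
Definition tS1 := RComp tMem [:: tG; RProj 2].
Definition tPb := RComp tSg [:: RComp tAdd [:: tMem; RComp (Sum tS1) [:: tPow2 (RProj 0); RProj 0; RProj 1]]].
Lemma tot_Pb : tot tPb (fun v => Pb (nth 0 v 0) (nth 0 v 1)).
Proof.
eapply tot_ext; [exact: (tot_c1 tot_sg (tot_c2 tot_add tot_mem (tot_c3 (tot_sum (tot_c2 tot_mem tot_G (tot_proj 2))) (tot_pow2 (tot_proj 0)) (tot_proj 0) (tot_proj 1))))|] => v /=.
by [].
Qed.

Definition W u := sumf (fun z => 2 ^ z * Pb u z) (Bd u).
Definition tS2 := RComp tMul [:: tPow2 (RProj 0); RComp tPb [:: RProj 1; RProj 0]].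
Definition tW := RComp (Sum tS2) [:: tBd; RProj 0; RProj 0].
Lemma tot_W : tot tW (fun v => W (nth 0 v 0)).
Proof.
eapply tot_ext; [exact: (tot_c3 (tot_sum (tot_c2 tot_mul (tot_pow2 (tot_proj 0)) (tot_c2 tot_Pb (tot_proj 1) (tot_proj 0)))) tot_Bd (tot_proj 0) (tot_proj 0))|] => v /=.
by [].
Qed.

Definition U n := iter n W 0.
Definition tU := Prim3 RZero (RComp tW [:: RProj 1]).
Lemma tot_U : tot tU (fun v => U (nth 0 v 0)).
Proof.
eapply tot_ext; [exact: (tot_prim tot_zero (tot_c1 tot_W (tot_proj 1)))|] => v /=.
by elim: (nth 0 v 0) => [|n IH] //; rewrite /= IH.
Qed.

Definition hh n := sumf (fun z => 2 ^ z * (mem (U n.+1) z && ~~ mem (U n) z)) (U n.+1).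
Definition tS3 := RComp tMul [:: tPow2 (RProj 0); RComp tMul [:: RComp tMem [:: RProj 1; RProj 0];
   RComp tSub [:: K 1; RComp tMem [:: RProj 2; RProj 0]]]].
Definition tH := RComp (Sum tS3) [:: RComp tU [:: RComp RSucc [:: RProj 0]]; RComp tU [:: RComp RSucc [:: RProj 0]]; tU].
Lemma tot_H : tot tH (fun v => hh (nth 0 v 0)).
Proof.
eapply tot_ext; [exact: (tot_c3 (tot_sum (tot_c2 tot_mul (tot_pow2 (tot_proj 0)) (tot_c2 tot_mul (tot_c2 tot_mem (tot_proj 1) (tot_proj 0)) (tot_c2 tot_sub (tot_K 1) (tot_c2 tot_mem (tot_proj 2) (tot_proj 0)))))) (tot_c1 tot_U (tot_c1 tot_succ (tot_proj 0))) (tot_c1 tot_U (tot_c1 tot_succ (tot_proj 0))) tot_U)|] => v /=.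
rewrite /hh; apply: eq_sumf => k; congr (_ * _).
by case: (mem _ k); case: (mem _ k).
Qed.

Lemma mem_W u z : mem (W u) z = mem u z || has (fun s => mem (gS s) z) (iota 0 (2 ^ u)).
Proof.
rewrite /W mem_bits /Pb addn_gt0 sumf_pos.
have -> : has (fun k => 0 < mem (gS k) z) (iota 0 (2 ^ u)) = has (fun s => mem (gS s) z) (iota 0 (2 ^ u)).
  by apply: eq_has => k; case: (mem _ _).
have -> : (0 < mem u z) = mem u z by case: (mem u z).
case: (boolP (_ || _)) => [H|]; last by rewrite andbF.
rewrite andbT /Bd addn1 ltnS.
case/orP: H => [/mem_lt H|/hasP[s]].
  exact: leq_trans (ltnW H) (leq_addr _ _).
rewrite mem_iota add0n => /andP[_ Hs] /mem_lt H.
apply: leq_trans (ltnW H) _; apply: leq_trans (leq_addl u _).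
exact: sumf_ge Hs.
Qed.

Lemma U_mono n m z : n <= m -> mem (U n) z -> mem (U m) z.
Proof.
elim: m => [|m IH]; first by rewrite leqn0 => /eqP->.
rewrite leq_eqVlt => /orP[/eqP->//|]; rewrite ltnS => H /(IH H) Hm.
by rewrite /= mem_W Hm.
Qed.

Lemma mem_hh n z : mem (hh n) z = mem (U n.+1) z && ~~ mem (U n) z.
Proof.
rewrite /hh mem_bits; case: (boolP (mem (U n.+1) z)) => H; last by rewrite !andbF.
by rewrite (mem_lt H).
Qed.
End H.

From Stdlib Require Import Classical.

Definition Undef := RMu (RComp RSucc [:: RZero]).
Lemma undef v y : ~ eval Undef v y.
Proof.
case/inv_mu=> /inv_comp[ws [_ H]] _.
by inversion H.
Qed.

Theorem mainTheorem10 (A : nat -> bool) :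
  D_weu A ->
  exists h : nat -> nat,
    computable h /\
    (forall n m, n <> m -> forall z, ~ (Dfin (h n) z /\ Dfin (h m) z)) /\
    (forall n, exists z, Dfin (h n) z /\ ~~ A z).
Proof.
move=> [[eA HA] [f [[ef Hf] Hweu]]].
pose tA := if code eA is Some t then t else Undef.
have HA' : forall z, A z <-> exists y, eval tA [:: z] y.
  move=> z; rewrite HA /defined /phi /tA; split.
    by case=> y [t [-> H]]; exists y.
  case E: (code eA) => [t|] [y H]; first by exists y, t.
  by case: (undef H).
have [tf Htf] : exists tf, forall n, eval tf [:: n] (f n).
  case E: (code ef) => [tf|]; last by case: (Hf 0) => t []; rewrite E.
  exists tf => n; case: (Hf n) => t []; rewrite E => [[<-]] //.
case: (classic (exists s, (forall z, mem s z -> ~~ A z) /\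
      (forall z, mem (gS tA f s) z -> ~~ A z -> mem s z))) => [[s [Hs1 Hs2]] | Hno].
  exfalso; case: (Hweu (idx (T tA s))).
    move=> z Hz; rewrite /defined /phi; case: (boolP (mem s z)) => Hm.
      by exists 0, (T tA s); split; [exact: code_idx | exact: T_def0].
    have HAz : A z.
      apply/negPn/negP => HnA.
      by move: (Hs2 z Hz HnA); rewrite (negbTE Hm).
    case/HA': HAz => y0 Hy0.
    by exists 1, (T tA s); split; [exact: code_idx | exact: T_def1 Hm Hy0].
  move=> z [Hz [y [[t [Ht Hev]] Hne]]].
  rewrite code_idx in Ht; case: Ht => Ht; subst t.
  case/T_inv: Hev => [[Hm Ey] | [Hm [Hy0 Ey]]]; subst y; apply: Hne; rewrite /charf.
    by rewrite (negbTE (Hs1 z Hm)).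
  by rewrite (proj2 (HA' z) Hy0).
have key : forall s, (forall z, mem s z -> ~~ A z) ->
    exists z, mem (gS tA f s) z && ~~ A z && ~~ mem s z.
  move=> s Hs; apply: NNPP => Hn; apply: Hno; exists s; split => // z Hz HnA.
  apply/negPn/negP => Hm; apply: Hn; exists z; by rewrite Hz HnA Hm.
exists (hh tA f); split.
  exists (idx (tH tA tf)) => n; exists (tH tA tf); split; first exact: code_idx.
  exact: (@tot_H tA tf f Htf [:: n]).
split.
  have H : forall n m z, n < m -> mem (hh tA f n) z -> mem (hh tA f m) z -> False.
    move=> n m z Hnm; rewrite !mem_hh => /andP[H1 _] /andP[_ H2].
    by move: H2; rewrite (U_mono Hnm H1).
  move=> n m Hnm z [Hn Hm].
  case: (ltngtP n m) => Hl; [exact: H Hl Hn Hm | exact: H Hl Hm Hn | by apply: Hnm].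
move=> n; set u := U tA f n.
pose s := sumf (fun z => 2 ^ z * (mem u z && ~~ A z)) u.
have Hs : forall z, mem s z -> ~~ A z.
  by move=> z; rewrite mem_bits => /andP[_ /andP[]].
case: (key s Hs) => z /andP[/andP[Hg HnA] Hns].
exists z; split; last exact: HnA.
change (mem (hh tA f n) z); rewrite mem_hh.
apply/andP; split.
  change (mem (W tA f u) z); rewrite mem_W; apply/orP; right; apply/hasP.
  by exists s => //; rewrite mem_iota add0n /=; exact: bits_lt.
apply/negP => Hu; by move: Hns; rewrite mem_bits (mem_lt Hu) Hu HnA.
Qed.
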